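(* Let $n\ge 2$. The fan $F_n$ admits an $(a,d)$-distance antimagic labeling for some integers $a$ and $d\ge 0$ if and only if $n=2$ or $n=4$.
   Context: The fan $F_n$ is obtained from a path $x_1x_2\cdots x_n$ by adding a center vertex $x_0$ adjacent to all of $x_1,\dots,x_n$; it has $n+1$ vertices. For a graph $G=(V,E)$ with $v=|V|$ and a bijection $f:V\to\{1,\dots,v\}$, the vertex-weight of $x$ is $w(x)=\sum_{y\in N(x)}f(y)$ with $N(x)$ the set of neighbours of $x$. For integers $a$ and $d\ge0$, $f$ is an $(a,d)$-distance antimagic labeling if the multiset of vertex-weights equals $\{a,a+d,\dots,a+(v-1)d\}$ (for $d=0$: all weights equal). *)

(* Defs.v *)
From mathcomp Require Import all_boot all_order all_algebra all_fingroup.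
Set Implicit Arguments. Unset Strict Implicit. Unset Printing Implicit Defensive.
Import GRing.Theory Num.Theory.

(* Fan F_n on vertex set 'I_n.+1: vertex 0 is the centre x_0,
   vertex i (1 <= i <= n) is the path vertex x_i. *)
Definition fan_adj (n : nat) : rel 'I_n.+1 :=
  fun x y =>
    [|| (val x == 0) && (val y != 0),
        (val y == 0) && (val x != 0)
      | [&& val x != 0, val y != 0 & ((val x == (val y).+1) || (val y == (val x).+1))]].

(* A bijection f : V -> {1,...,v} is encoded as a permutation s of 'I_n.+1
   with f x = s x + 1. *)
Arguments fan_adj : clear implicits.

Definition label {n : nat} (s : {perm 'I_n.+1}) (x : 'I_n.+1) : nat := (s x).+1.

Definition vweight {n : nat} (s : {perm 'I_n.+1}) (x : 'I_n.+1) : nat :=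
  \sum_(y : 'I_n.+1 | fan_adj n x y) label s y.

Definition distance_antimagic {n : nat} (s : {perm 'I_n.+1}) (a : int) (d : nat) : Prop :=
  perm_eq [seq Posz (vweight s x) | x : 'I_n.+1]
          [seq (a + Posz (i * d))%R | i <- iota 0 n.+1].

(* Main.v *)
Require Import Defs.
From mathcomp Require Import all_boot all_order all_algebra all_fingroup.
From mathcomp Require Import zify.
Definition Q (i k : nat) : bool := (k == 0) || ((k != 0) && ((i == k.+1) || (k == i.+1))).

Lemma sumQ (g : nat -> nat) i N : 0 < i ->
  \sum_(k < N) (if Q i k then g k else 0) =
  (if 0 < N then g 0 else 0) + (if 1 < i then (if i.-1 < N then g i.-1 else 0) else 0)
   + (if i.+1 < N then g i.+1 else 0).
Proof.
move=> hi; elim: N => [|N IH]; first by rewrite big_ord0 !ltn0; case: ifP.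
rewrite big_ord_recr /= IH /Q.
case: N IH => [|N] IH.
  repeat (case: ifP => ? /=); lia.
case: (eqVneq i N.+2) => [->|h1] /=.
  rewrite ?eqxx /=. repeat (case: ifP => ? /=); lia.
case: (eqVneq N.+1 i.+1) => [[->]|h2] /=.
  rewrite ?eqxx ?orbT /=. repeat (case: ifP => ? /=); lia.
move/eqP: h1 => h1; move/eqP: h2 => h2; repeat (case: ifP => ? /=); lia.
Qed.

Definition gl {n} (s : {perm 'I_n.+1}) (k : nat) : nat := label s (inord k).

Lemma vweight_path n (s : {perm 'I_n.+1}) (x : 'I_n.+1) : val x != 0 ->
  vweight s x = gl s 0 + (if 1 < x then gl s x.-1 else 0) + (if x < n then gl s x.+1 else 0).
Proof.
move=> hx; rewrite /vweight big_mkcond /=.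
have -> : \sum_(y < n.+1) (if fan_adj n x y then label s y else 0)
        = \sum_(y < n.+1) (if Q x y then gl s y else 0).
  apply: eq_bigr => y _; rewrite /gl inord_val /fan_adj /Q (negbTE hx) /= andbT //.
rewrite sumQ; last by rewrite lt0n.
have hx1 := ltn_ord x. rewrite ltn0Sn ltnS; case: ifP => h //; rewrite ifT //; lia.
Qed.

Lemma sum_labels n (s : {perm 'I_n.+1}) : \sum_(y < n.+1) label s y = sumn (iota 1 n.+1).
Proof.
rewrite /label (reindex_inj (@perm_inj _ s^-1)).
under eq_bigr => y _ do rewrite permKV.
rewrite -(big_mkord xpredT (fun i => i.+1)) /index_iota subn0.
have -> : iota 1 n.+1 = map (addn 1) (iota 0 n.+1) by rewrite -iotaDl.
by rewrite sumnE big_map.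
Qed.

Lemma vweight_center n (s : {perm 'I_n.+1}) :
  vweight s ord0 = sumn (iota 1 n.+1) - gl s 0.
Proof.
rewrite -(sum_labels n s) (bigD1 ord0) //= /gl.
have -> : (inord 0 : 'I_n.+1) = ord0 by apply: val_inj; rewrite /= inordK.
rewrite addKn /vweight; apply: eq_bigl => y.
by rewrite /fan_adj /=; case: y => [[|k] ?].
Qed.

Definition wl n (ls : seq nat) (k : nat) : nat :=
  if k == 0 then sumn (iota 1 n.+1) - nth 0 ls 0
  else nth 0 ls 0 + (if 1 < k then nth 0 ls k.-1 else 0) + (if k < n then nth 0 ls k.+1 else 0).
Definition labs n (s : {perm 'I_n.+1}) := [seq gl s k | k <- iota 0 n.+1].

Lemma nth_labs n s j : j < n.+1 -> nth 0 (labs n s) j = gl s j.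
Proof. by move=> hj; rewrite (nth_map 0) ?size_iota // nth_iota. Qed.

Lemma weights_eq n (s : {perm 'I_n.+1}) :
  [seq vweight s x | x : 'I_n.+1] = map (wl n (labs n s)) (iota 0 n.+1).
Proof.
rewrite -val_enum_ord -map_comp; apply: eq_map => x /=; rewrite /wl.
case: eqP => hx.
  have -> : x = ord0 by apply: val_inj.
  by rewrite vweight_center nth_labs.
have hxn := ltn_ord x.
rewrite vweight_path; last by apply/eqP.
rewrite nth_labs //; congr (_ + _ + _).
  by case: ifP => h //; rewrite nth_labs //; lia.
by case: ifP => h //; rewrite nth_labs //; lia.
Qed.

Lemma labs_perm n (s : {perm 'I_n.+1}) : perm_eq (labs n s) (iota 1 n.+1).
Proof.
have hu : uniq (labs n s).
  rewrite map_inj_in_uniq ?iota_uniq // => j k; rewrite !mem_iota /= !add0n => hj hk.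
  rewrite /gl /label => [[]] /val_inj /perm_inj /(congr1 (@nat_of_ord _)).
  by rewrite !inordK.
have hs : {subset labs n s <= iota 1 n.+1}.
  move=> y /mapP [k _ ->]; rewrite mem_iota /gl /label; have := ltn_ord (s (inord k)); lia.
have [_ he] := uniq_min_size hu hs ltac:(by rewrite size_map !size_iota).
by apply: uniq_perm => //; apply: iota_uniq.
Qed.

Lemma ap_of_da n (W : seq nat) (a : int) (d : nat) :
  perm_eq [seq Posz w | w <- W] [seq (a + Posz (i*d))%R | i <- iota 0 n.+1] ->
  exists w, perm_eq W [seq w + i*d | i <- iota 0 n.+1].
Proof.
move=> H.
have : a \in [seq Posz w | w <- W].
  rewrite (perm_mem H); apply/mapP; exists 0; first by rewrite mem_iota.
  by rewrite mul0n GRing.addr0.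
move=> /mapP [w _ ha]; exists w; apply: (@perm_map_inj _ _ Posz).
  by move=> x y [].
apply: (perm_trans H); rewrite -map_comp ha.
suff -> : [seq (Posz w + Posz (i*d))%R | i <- iota 0 n.+1] =
   [seq (Posz \o (fun i => w + i*d)) i | i <- iota 0 n.+1] by [].
by apply: eq_map => i /=; rewrite PoszD.
Qed.

Lemma da_of_ap n (W : seq nat) (w d : nat) :
  perm_eq W [seq w + i*d | i <- iota 0 n.+1] ->
  perm_eq [seq Posz x | x <- W] [seq (Posz w + Posz (i*d))%R | i <- iota 0 n.+1].
Proof.
move=> H; apply: (perm_trans (perm_map Posz H)); rewrite -map_comp.
suff -> : [seq (Posz w + Posz (i*d))%R | i <- iota 0 n.+1] =
   [seq (Posz \o (fun i => w + i*d)) i | i <- iota 0 n.+1] by [].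
by apply: eq_map => i /=; rewrite PoszD.
Qed.

Definition isAP n (W : seq nat) :=
  has (fun w => if all (fun x => w <= x) W then has (fun w' =>
     if (w + n * (w' - w) \in W) then
     perm_eq W [seq w + i * (w' - w) | i <- iota 0 n.+1] else false) W else false) W.

Lemma isAP_of n W w d : 0 < n -> perm_eq W [seq w + i*d | i <- iota 0 n.+1] -> isAP n W.
Proof.
move=> hn H; apply/hasP; exists w.
  by rewrite (perm_mem H); apply/mapP; exists 0; rewrite ?mem_iota // mul0n addn0.
rewrite ifT; last first.
  by apply/allP => x; rewrite (perm_mem H) => /mapP [i _ ->]; apply: leq_addr.
apply/hasP; exists (w + d); last first.
  rewrite addKn H ifT // (perm_mem H); apply/mapP; exists n => //.
  rewrite mem_iota; lia.
by rewrite (perm_mem H); apply/mapP; exists 1; rewrite ?mem_iota ?mul1n //; lia.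
Qed.

Lemma fc3 : all (fun ls => ~~ isAP 3 (map (wl 3 ls) (iota 0 4))) (permutations (iota 1 4)).
Proof. vm_compute. reflexivity. Qed.
Lemma fc5 : all (fun ls => ~~ isAP 5 (map (wl 5 ls) (iota 0 6))) (permutations (iota 1 6)).
Proof. vm_compute. reflexivity. Qed.
Lemma fc6 : all (fun ls => ~~ isAP 6 (map (wl 6 ls) (iota 0 7))) (permutations (iota 1 7)).
Proof. vm_compute. reflexivity. Qed.
Lemma sumn_iota1 N : (sumn (iota 1 N)).*2 = N * N.+1.
Proof.
elim: N => [//|N IH].
have -> : iota 1 N.+1 = iota 1 N ++ [:: N.+1] by rewrite -(addn1 N) iotaD (addnC 1).
rewrite sumn_cat /= doubleD IH; lia.
Qed.

Lemma big_case n ls w d : 7 <= n -> perm_eq ls (iota 1 n.+1) ->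
  perm_eq (map (wl n ls) (iota 0 n.+1)) [seq w + i*d | i <- iota 0 n.+1] -> False.
Proof.
move=> h7 hp H.
have hb : forall k, k <= n -> 1 <= nth 0 ls k <= n.+1.
  move=> k hk; have : nth 0 ls k \in iota 1 n.+1.
    by rewrite -(perm_mem hp) mem_nth // (perm_size hp) size_iota.
  rewrite mem_iota; lia.
have hS := sumn_iota1 n.+1.
have inW : forall j, j <= n -> exists2 i, i <= n & wl n ls j = w + i * d.
  move=> j hj; have : wl n ls j \in [seq w + i*d | i <- iota 0 n.+1].
    rewrite -(perm_mem H); apply/mapP; exists j => //; rewrite mem_iota; lia.
  move=> /mapP [i]; rewrite mem_iota => hi ->; exists i => //; lia.
have inL : forall i, i <= n -> exists2 j, j <= n & w + i * d = wl n ls j.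
  move=> i hi; have : w + i * d \in map (wl n ls) (iota 0 n.+1).
    rewrite (perm_mem H); apply/mapP; exists i => //; rewrite mem_iota; lia.
  move=> /mapP [j]; rewrite mem_iota => hj ->; exists j => //; lia.
have ub : forall j, 0 < j <= n -> 1 <= wl n ls j <= 3 * n + 3.
  move=> j hj; rewrite /wl ifF; last by lia.
  have := hb 0 (leq0n _).
  case: ifP => h1; [have := hb j.-1 ltac:(lia)|]; (case: ifP => h2; [have := hb j.+1 ltac:(lia)|]); lia.
have W0 : wl n ls 0 = sumn (iota 1 n.+1) - nth 0 ls 0 by [].
have big0 : 3 * n + 6 < wl n ls 0.
  rewrite W0; have := hb 0 (leq0n _); move: hS; set S := sumn _; nia.
have [k0 hk0 e0] := inW 0 (leq0n _).
have eM : wl n ls 0 = w + n * d.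
  have [j hj ej] := inL n (leqnn _).
  case: (posnP j) => [j0|jp]; first by rewrite ej j0.
  have := ub j ltac:(lia); have : k0 * d <= n * d by apply: leq_mul.
  lia.
have dp : 0 < d.
  case: (posnP d) => // d0.
  have [i1 _ e1] := inW 1 ltac:(lia).
  have := ub 1 ltac:(lia); move: e1 eM; rewrite d0 !muln0; lia.
have e1 : w + n.-1 * d <= 3 * n + 3.
  have [j hj ej] := inL n.-1 ltac:(lia).
  case: (posnP j) => [j0|jp].
    move: ej; rewrite j0 eM => /eqP; rewrite eqn_add2l eqn_mul2r; case/orP => /eqP; lia.
  have := ub j ltac:(lia); lia.
have w1 : 1 <= w.
  have [j hj ej] := inL 0 (leq0n _).
  case: (posnP j) => [j0|jp].
    move: ej; rewrite j0 eM mul0n addn0 => /eqP; rewrite -{1}(addn0 w) eqn_add2l eq_sym muln_eq0; case/orP => /eqP; lia.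
  have := ub j ltac:(lia); lia.
have d3 : d <= 3.
  case: (leqP d 3) => // d4; have : 4 * n.-1 <= n.-1 * d by rewrite mulnC leq_mul2l d4 orbT.
  lia.
have : wl n ls 0 <= 3 * n + 6.
  rewrite eM; have : n * d = n.-1 * d + d by case: (n) h7 => // m _; rewrite mulSn addnC.
  lia.
lia.
Qed.

Lemma key m : m < 7 -> 2 <= m -> m != 2 -> m != 4 -> forall ls,
  ls \in permutations (iota 1 m.+1) -> ~~ isAP m (map (wl m ls) (iota 0 m.+1)).
Proof.
case: m => [|[|[|[|[|[|[|m]]]]]]] // _ _ _ _ ls hls.
- exact: (allP fc3 _ hls).
- exact: (allP fc5 _ hls).
- exact: (allP fc6 _ hls).
Qed.

Lemma da_intro n (s : {perm 'I_n.+1}) w d :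
  perm_eq (map (wl n (labs n s)) (iota 0 n.+1)) [seq w + i*d | i <- iota 0 n.+1] ->
  distance_antimagic s (Posz w) d.
Proof.
move=> H; rewrite /distance_antimagic.
have -> : [seq Posz (vweight s x) | x : 'I_n.+1] = map Posz (map (wl n (labs n s)) (iota 0 n.+1))
  by rewrite -weights_eq -map_comp.
exact: da_of_ap.
Qed.

Theorem mainTheorem13 (n : nat) (hn : 2 <= n) :
  (exists (s : {perm 'I_n.+1}) (a : int) (d : nat), distance_antimagic s a d)
  <-> (n = 2 \/ n = 4).
Proof.
split.
  move=> [s [a [d H]]].
  have H' : perm_eq [seq Posz w | w <- map (wl n (labs n s)) (iota 0 n.+1)]
                    [seq (a + Posz (i*d))%R | i <- iota 0 n.+1].
    by rewrite -weights_eq -map_comp; exact: H.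
  have [w Hw] := ap_of_da _ _ _ _ H'.
  have hp := labs_perm n s.
  case: (leqP 7 n) => h7; first by case: (@big_case n _ _ _ h7 hp Hw).
  case: (eqVneq n 2) => [->|n2]; first by left.
  case: (eqVneq n 4) => [->|n4]; first by right.
  have hmem : labs n s \in permutations (iota 1 n.+1) by rewrite mem_permutations.
  have := key n h7 hn n2 n4 _ hmem.
  by rewrite (isAP_of n _ _ _ _ Hw) //; lia.
case=> ->.
  exists 1%g, (Posz 3), 1; apply: da_intro.
  rewrite /labs /= /gl /label !perm1 !inordK //.

exists (perm (@ord_pred_inj 5)), (Posz 7), 1; apply: da_intro.
rewrite /labs /= /gl /label !permE /= !inordK //.
Qed.
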